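(* Let $A$ be a UFD containing $\mathbb{Q}$, $K=\operatorname{frac}(A)$, $B=A^{[n]}$ and $D\in\operatorname{LND}_A(B)$. Let $D_K$ be the extension of $D$ to $K^{[n]}$. If $D$ is irreducible, then $D_K$ is irreducible.
   Context: $A^{[n]}$ denotes the polynomial ring in $n$ variables over $A$; $\operatorname{LND}_A(B)$ is the set of locally nilpotent $A$-derivations of $B$. A derivation $D$ of a domain $R$ is reducible if $D(R)\subset fR$ for some non-unit $f\in R$, and irreducible otherwise. *)

(* Defs.v *)
From HB Require Import structures.
From mathcomp Require Import all_boot all_order all_algebra.
Set Implicit Arguments. Unset Strict Implicit. Unset Printing Implicit Defensive.
Import GRing.Theory.
Local Open Scope ring_scope.

(* Polynomial ring A^[n] in n variables, realised as iterated univariate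
   polynomials: A^[0] = A, A^[n+1] = (A^[n])[X]. *)
Fixpoint mpoly (R : idomainType) (n : nat) : idomainType :=
  if n is n'.+1 then ({poly mpoly R n'} : idomainType) else R.

Fixpoint mconst (R : idomainType) (n : nat) : R -> mpoly R n :=
  match n return R -> mpoly R n with
  | 0 => fun a => a
  | n'.+1 => fun a => (@mconst R n' a)%:P
  end.

Fixpoint mmap (R S : idomainType) (f : R -> S) (n : nat) : mpoly R n -> mpoly S n :=
  match n return mpoly R n -> mpoly S n with
  | 0 => f
  | n'.+1 => fun p => map_poly (@mmap R S f n') p
  end.

Definition dvdr (R : comNzRingType) (a b : R) : Prop := exists c, b = a * c.

Definition irreducible_elt (R : idomainType) (a : R) : Prop :=
  a != 0 /\ a \isn't a GRing.unit /\
  forall b c : R, a = b * c -> b \is a GRing.unit \/ c \is a GRing.unit.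

Definition prime_elt (R : idomainType) (p : R) : Prop :=
  p != 0 /\ p \isn't a GRing.unit /\
  forall a b : R, dvdr p (a * b) -> dvdr p a \/ dvdr p b.

Definition UFD (R : idomainType) : Prop :=
  (forall a : R, a != 0 -> a \isn't a GRing.unit ->
     exists s : seq R, (forall x, x \in s -> irreducible_elt x) /\ a = \prod_(x <- s) x)
  /\ (forall p : R, irreducible_elt p -> prime_elt p).

(* R contains Q: every positive integer is invertible in R *)
Definition contains_Q (R : idomainType) : Prop :=
  forall m : nat, (m.+1)%:R \is a (@GRing.unit R).

Definition is_derivation_over (A B : comNzRingType) (iota : A -> B) (D : B -> B) : Prop :=
  (forall x y, D (x + y) = D x + D y) /\
  (forall x y, D (x * y) = x * D y + D x * y) /\
  (forall a, D (iota a) = 0).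

Definition locally_nilpotent (B : nzRingType) (D : B -> B) : Prop :=
  forall b, exists m : nat, iter m D b = 0.

Definition LND_over (A B : comNzRingType) (iota : A -> B) (D : B -> B) : Prop :=
  is_derivation_over iota D /\ locally_nilpotent D.

Definition reducible_der (R : idomainType) (D : R -> R) : Prop :=
  exists f : R, f \isn't a GRing.unit /\ forall r, dvdr f (D r).

Definition irreducible_der (R : idomainType) (D : R -> R) : Prop :=
  ~ reducible_der D.

(* Main.v *)
Require Import Defs.
From HB Require Import structures.
From mathcomp Require Import all_boot all_order all_algebra.
From mathcomp Require Import ring zify.
From Stdlib Require Import Classical.
Set Implicit Arguments. Unset Strict Implicit. Unset Printing Implicit Defensive.
Import GRing.Theory.
Local Open Scope ring_scope.

Section Dvd.
Variable R : idomainType.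
Implicit Types a b c p : R.

Lemma dvdr0 p : dvdr p 0. Proof. by exists 0; rewrite mulr0. Qed.
Lemma dvdrD p a b : dvdr p a -> dvdr p b -> dvdr p (a + b).
Proof. by move=> [x ->] [y ->]; exists (x + y); rewrite mulrDr. Qed.
Lemma dvdrN p a : dvdr p a -> dvdr p (- a).
Proof. by move=> [x ->]; exists (- x); rewrite mulrN. Qed.
Lemma dvdrB p a b : dvdr p a -> dvdr p b -> dvdr p (a - b).
Proof. by move=> ha hb; apply: dvdrD => //; apply: dvdrN. Qed.
Lemma dvdrMr p a b : dvdr p a -> dvdr p (a * b).
Proof. by move=> [x ->]; exists (x * b); rewrite mulrA. Qed.
Lemma dvdrMl p a b : dvdr p b -> dvdr p (a * b).
Proof. by move=> [x ->]; exists (a * x); rewrite mulrCA. Qed.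
Lemma dvdr_unit p : dvdr p 1 -> p \is a GRing.unit.
Proof. by move=> [x hx]; apply/unitrPr; exists x. Qed.
End Dvd.

Section PolyPrime.
Variable R : idomainType.
Variable p : R.
Hypothesis Hp : prime_elt p.
Local Notation dvdP q := (forall i, dvdr p (q : {poly R})`_i).

Lemma dvdr_polyC (q : {poly R}) : dvdr p%:P q <-> dvdP q.
Proof.
split.
  by move=> [c ->] i; rewrite coefCM; exists c`_i.
move=> H.
have H' : forall i, exists c, q`_i == p * c.
  by move=> i; case: (H i) => c hc; exists c; apply/eqP.
exists (\poly_(i < size q) xchoose (H' i)).
apply/polyP => i; rewrite coefCM coef_poly.
case: ltnP => hi.
  by apply/eqP; exact: (xchooseP (H' i)).
by rewrite mulr0 nth_default.
Qed.

Lemma take1 (a : {poly R}) : take_poly 1 a = (a`_0)%:P.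
Proof.
apply/polyP => i; rewrite coef_take_poly coefC.
by case: i.
Qed.

Lemma split0 (a : {poly R}) : a = (a`_0)%:P + drop_poly 1 a * 'X.
Proof. by rewrite -take1 -[in RHS](expr1 'X) poly_take_drop. Qed.

Lemma shift_dvd (a b : {poly R}) : dvdr p a`_0 -> dvdP (a * b) ->
  dvdP (drop_poly 1 a * b).
Proof.
move=> h0 hab i.
have E : (a * b)`_i.+1 = a`_0 * b`_i.+1 + (drop_poly 1 a * b)`_i.
  rewrite {1}(split0 a) mulrDl coefD coefCM.
  by rewrite -mulrA [_ * b]mulrC mulrA coefMX.
have -> : (drop_poly 1 a * b)`_i = (a * b)`_i.+1 - a`_0 * b`_i.+1.
  by rewrite E [_ + (drop_poly 1 a * b)`_i]addrC addrK.
by apply: dvdrB => //; apply: dvdrMr.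
Qed.

Lemma unshift_dvd (a : {poly R}) : dvdr p a`_0 -> dvdP (drop_poly 1 a) -> dvdP a.
Proof.
move=> h0 h [|i] //.
by have := h i; rewrite coef_drop_poly addn1.
Qed.

Lemma prime_poly_aux k : forall a b : {poly R}, (size a + size b <= k)%N ->
  dvdP (a * b) -> dvdP a \/ dvdP b.
Proof.
elim: k => [|k IH] a b hs hab.
  left => i; have : size a = 0%N by move: hs; case: (size a).
  by move/eqP; rewrite size_poly_eq0 => /eqP ->; rewrite coef0; apply: dvdr0.
have [->|a0] := eqVneq a 0; first by left => i; rewrite coef0; apply: dvdr0.
have [->|b0] := eqVneq b 0; first by right => i; rewrite coef0; apply: dvdr0.
case: (classic (dvdr p a`_0)) => ha.
  have := shift_dvd ha hab.
  have hsz : (size (drop_poly 1 a) + size b <= k)%N.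
    by rewrite size_drop_poly; move: hs a0; rewrite -size_poly_eq0; lia.
  move=> /(IH _ _ hsz) [h|h]; last by right.
  by left; apply: unshift_dvd.
case: (classic (dvdr p b`_0)) => hb.
  rewrite mulrC in hab.
  have := shift_dvd hb hab.
  have hsz : (size (drop_poly 1 b) + size a <= k)%N.
    by rewrite size_drop_poly; move: hs b0; rewrite -size_poly_eq0; lia.
  move=> /(IH _ _ hsz) [h|h]; first by right; apply: unshift_dvd.
  by left.
have := hab 0%N; rewrite coef0M => /(proj2 (proj2 Hp)) [] //.
Qed.

Lemma prime_polyC : prime_elt (p%:P : {poly R}).
Proof.
case: Hp => p0 [pu _].
split; first by rewrite polyC_eq0.
split.
  apply/negP; rewrite poly_unitE coefC /= => /andP [_ hu].
  by move/negP: pu.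
move=> a b /dvdr_polyC /(@prime_poly_aux (size a + size b)) [] // h.
  by left; apply/dvdr_polyC.
by right; apply/dvdr_polyC.
Qed.
End PolyPrime.

Section MConst.
Variable R : idomainType.

Lemma mconstM n (a b : R) : mconst n (a * b) = mconst n a * mconst n b.
Proof. by elim: n => [|n IH] //=; rewrite IH polyCM. Qed.
Lemma mconst1 n : mconst n (1 : R) = 1.
Proof. by elim: n => [|n IH] //=; rewrite IH. Qed.
Lemma mconst_eq0 n (a : R) : (mconst n a == 0) = (a == 0).
Proof. by elim: n => [|n IH] //=; rewrite polyC_eq0 IH. Qed.

Lemma prime_mconst n (p : R) : prime_elt p -> prime_elt (mconst n p).
Proof. by elim: n => [|n IH] //= hp; apply: prime_polyC; apply: IH. Qed.

Fixpoint lcn (n : nat) : mpoly R n -> R :=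
  match n return mpoly R n -> R with
  | 0 => fun x => x
  | n'.+1 => fun q => lcn (lead_coef q)
  end.

Lemma lcnM n (x y : mpoly R n) : lcn (x * y) = lcn x * lcn y.
Proof. by elim: n x y => [|n IH] x y //=; rewrite lead_coefM IH. Qed.
Lemma lcn_mconst n (a : R) : lcn (mconst n a) = a.
Proof. by elim: n => [|n IH] //=; rewrite lead_coefC IH. Qed.
Lemma lcn_eq0 n (x : mpoly R n) : (lcn x == 0) = (x == 0).
Proof. by elim: n x => [|n IH] x //=; rewrite IH lead_coef_eq0. Qed.
End MConst.

Lemma mconst_unit (F : fieldType) n (x : F) : x != 0 -> mconst n x \is a GRing.unit.
Proof.
move=> hx; apply/unitrPr; exists (mconst n x^-1).
by rewrite -mconstM mulfV // mconst1.
Qed.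

Section Frac.
Variable A : idomainType.
Local Notation K := {fraction A}.

Lemma frac_clear (x : K) :
  exists2 d : A, d != 0 & exists n : A, tofrac d * x = tofrac n.
Proof.
elim/quotW: x => r.
exists (frac r).2; first exact: denom_ratioP.
exists (frac r).1.
unlock FracField.tofrac. apply: (etrans (esym (FracField.pi_mul _ _))).
apply/eqmodP; rewrite /= FracField.equivfE /FracField.mulf /=.
rewrite !numden_Ratio ?mulf_neq0 ?oner_eq0 ?denom_ratioP //.
by rewrite mulr1 mul1r.
Qed.

Fixpoint mm (n : nat) : {rmorphism mpoly A n -> mpoly K n} :=
  match n return {rmorphism mpoly A n -> mpoly K n} with
  | 0 => (@tofrac A : {rmorphism A -> K})
  | n'.+1 => (map_poly (mm n') : {rmorphism {poly mpoly A n'} -> {poly mpoly K n'}})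
  end.

Lemma mmapE n x : @mmap A K (@tofrac A) n x = mm n x.
Proof. by elim: n x => [|n IH] x //=; apply: eq_map_poly. Qed.

Lemma mm_inj n : injective (mm n).
Proof.
elim: n => [|n IH] /=.
  by move=> x y /eqP; rewrite tofrac_eq => /eqP.
by apply: map_inj_poly => //; rewrite rmorph0.
Qed.

Lemma mm_mconst n (a : A) : mm n (mconst n a) = mconst n (tofrac a).
Proof. elim: n => [|n IH] //=. by rewrite map_polyC; congr (_%:P); exact: IH. Qed.

Lemma mclear n (X : mpoly K n) :
  exists2 d : A, d != 0 & exists g, mconst n (tofrac d) * X = mm n g.
Proof.
elim: n X => [|n IH] X; first exact: frac_clear.
elim/poly_ind: X => [|Y c [d1 d10 [g1 h1]]].
  by exists 1; rewrite ?oner_eq0 //; exists 0; rewrite mulr0 rmorph0.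
case: (IH c) => d2 d20 [g2 h2].
exists (d1 * d2); first by rewrite mulf_neq0.
exists ((mconst n d2)%:P * g1 * 'X + (mconst n d1 * g2)%:P).
simpl in h1 |- *.
rewrite rmorphD !rmorphM /= map_polyX !map_polyC /= !mm_mconst -h1 -h2.
rewrite mconstM !polyCM.
ring.
Qed.
End Frac.

Section UFDpart.
Variable A : idomainType.
Hypothesis HUFD : UFD A.

Definition good (a : A) (k : nat) : Prop :=
  exists s : seq A, size s = k /\ (forall x, x \in s -> irreducible_elt x) /\
    exists2 u, u \is a GRing.unit & a = u * \prod_(x <- s) x.

Lemma good_ex (a : A) : a != 0 -> exists k, good a k.
Proof.
move=> a0; case: (boolP (a \is a GRing.unit)) => ha.
  by exists 0%N, [::]; split => //; split => //; exists a => //; rewrite big_nil mulr1.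
case: (proj1 HUFD a a0 ha) => s [hs ->].
by exists (size s), s; split => //; split => //; exists 1; rewrite ?unitr1 ?mul1r.
Qed.

Lemma prime_dvd_prod (p : A) (s : seq A) : prime_elt p ->
  dvdr p (\prod_(x <- s) x) -> exists2 x, x \in s & dvdr p x.
Proof.
move=> hp; elim: s => [|y s IH].
  by rewrite big_nil => /dvdr_unit hu; case: hp => _ [/negP].
rewrite big_cons => /(proj2 (proj2 hp)) [h|h].
  by exists y; rewrite ?mem_head.
by case: (IH h) => x hx hd; exists x; rewrite ?in_cons ?hx ?orbT.
Qed.

Lemma good_div (p a : A) k : prime_elt p -> good (p * a) k -> (0 < k)%N /\ good a k.-1.
Proof.
move=> hp [s [<- [hirr [u hu hpa]]]].
have p0 := proj1 hp.
have : dvdr p (\prod_(x <- s) x).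
  by exists (u^-1 * a); rewrite mulrCA hpa mulrA mulVr ?mul1r.
move=> /(prime_dvd_prod hp) [x xs [v xv]].
have vu : v \is a GRing.unit.
  case: (proj2 (proj2 (hirr x xs)) _ _ xv) => // pu.
  by case: hp => _ [/negP].
split; first by case: s xs {hirr hpa} => //.
exists (rem x s); split; first by rewrite size_rem.
split; first by move=> y /mem_rem; apply: hirr.
exists (u * v); first by rewrite unitrM hu vu.
apply: (mulfI p0).
rewrite hpa (big_rem x xs) /= xv.
ring.
Qed.

Lemma nonunit_prime (c : A) : c != 0 -> c \isn't a GRing.unit ->
  exists p c', prime_elt p /\ c = p * c'.
Proof.
move=> c0 cu; case: (proj1 HUFD c c0 cu) => s [hs ec].
case: s hs ec => [|x s] hs ec.
  by move: cu; rewrite ec big_nil unitr1.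
exists x, (\prod_(y <- s) y); split; last by rewrite ec big_cons.
by apply: (proj2 HUFD); apply: hs; rewrite mem_head.
Qed.
End UFDpart.

Section Main.
Variable A : idomainType.
Hypothesis HUFD : UFD A.
Variable n : nat.
Variable D : mpoly A n -> mpoly A n.
Local Notation B := (mpoly A n).

Lemma inner (g : B) k : forall (c : A) b (h : B), c != 0 -> good c k ->
  mconst n c * D b = g * h ->
  dvdr g (D b) \/ exists2 p, prime_elt p & dvdr (mconst n p) g.
Proof.
elim: k => [|k IH] c b h c0 gc e.
- case: (boolP (c \is a GRing.unit)) => cu.
    left; exists (mconst n c^-1 * h).
    by rewrite mulrCA -e mulrA -mconstM mulVr // mconst1 mul1r.
  case: (nonunit_prime HUFD c0 cu) => p [c' [hp ec]].
  by move: gc; rewrite ec => /(good_div hp) [].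
- case: (boolP (c \is a GRing.unit)) => cu.
    left; exists (mconst n c^-1 * h).
    by rewrite mulrCA -e mulrA -mconstM mulVr // mconst1 mul1r.
  case: (nonunit_prime HUFD c0 cu) => p [c' [hp ec]].
  move: gc; rewrite ec => /(good_div hp) [_ gc'].
  have hpB := prime_mconst n hp.
  have : dvdr (mconst n p) (g * h).
    by exists (mconst n c' * D b); rewrite -e ec mconstM mulrA.
  move=> /(proj2 (proj2 hpB)) [hg|[h' eh]]; first by right; exists p.
  have c'0 : c' != 0 by move: c0; rewrite ec; apply: contra => /eqP ->; rewrite mulr0.
  apply: (IH c' b h' c'0 gc').
  apply: (mulfI (proj1 hpB)).
  rewrite mulrA -mconstM -ec e eh.
  ring.
Qed.

Lemma step (g : B) : mm A n g \isn't a GRing.unit ->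
  (forall b, exists2 c : A, c != 0 & exists h, mconst n c * D b = g * h) ->
  reducible_der D \/ exists p g', prime_elt p /\ g = mconst n p * g'.
Proof.
move=> gu hP.
case: (classic (forall b, dvdr g (D b))) => hall.
  left; exists g; split => //; apply: contra gu; exact: rmorph_unit.
case: (not_all_ex_not _ _ hall) => b hb.
case: (hP b) => c c0 [h e].
case: (good_ex HUFD c0) => k gk.
case: (inner c0 gk e) => // [[p hp [g' eg]]].
by right; exists p, g'.
Qed.

Lemma outer k : forall g : B, g != 0 -> good (lcn g) k ->
  mm A n g \isn't a GRing.unit ->
  (forall b, exists2 c : A, c != 0 & exists h, mconst n c * D b = g * h) ->
  reducible_der D.
Proof.
elim: k => [|k IH] g g0 gk gu hP; case: (step gu hP) => // [[p [g' [hp eg]]]];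
  move: gk; rewrite eg lcnM lcn_mconst => /(good_div hp) [//= _ gk'].
have p0 : p != 0 := proj1 hp.
have g'0 : g' != 0 by move: g0; rewrite eg; apply: contra => /eqP ->; rewrite mulr0.
apply: (IH g' g'0 gk').
  apply: contra gu => hu.
  rewrite eg rmorphM mm_mconst unitrM hu andbT.
  by apply: mconst_unit; rewrite tofrac_eq0.
move=> b; case: (hP b) => c c0 [h e]; exists c => //.
by exists (mconst n p * h); rewrite e eg mulrCA mulrA.
Qed.
End Main.

Theorem lemma4p1 (A : idomainType) (n : nat)
  (HUFD : UFD A) (HQ : contains_Q A)
  (D : mpoly A n -> mpoly A n)
  (DK : mpoly {fraction A} n -> mpoly {fraction A} n) :
  LND_over (@mconst A n) D ->
  is_derivation_over (@mconst {fraction A} n) DK ->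
  (forall b, DK (@mmap A {fraction A} (@tofrac A) n b) = @mmap A {fraction A} (@tofrac A) n (D b)) ->
  irreducible_der D -> irreducible_der DK.
Proof.
move=> _ _ hDK hirr [f [fu hf]]; apply: hirr.
have hdiv : forall b, dvdr f (mm A n (D b)).
  by move=> b; rewrite -mmapE -hDK.
case: (mclear f) => d d0 [g0 eg0].
have md0 : mconst n (tofrac d) != 0 :> mpoly {fraction A} n.
  by rewrite mconst_eq0 tofrac_eq0.
have [g00|g0n] := eqVneq g0 0.
  exists 0; split; first by rewrite unitr0.
  move=> b; exists 0; rewrite mulr0.
  have f0 : f = 0.
    by apply/eqP; move: eg0; rewrite g00 rmorph0 => /eqP; rewrite mulf_eq0 (negbTE md0).
  case: (hdiv b) => q; rewrite f0 mul0r => /eqP.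
  by rewrite -(rmorph0 (mm A n)) (inj_eq (@mm_inj A n)) => /eqP.
have lg0 : lcn g0 != 0 by rewrite lcn_eq0.
case: (good_ex HUFD lg0) => k gk.
apply: (outer HUFD g0n gk).
  rewrite -eg0 unitrM negb_and fu orbT //.
move=> b; case: (hdiv b) => q eq.
case: (mclear q) => e e0 [h eh].
exists (d * e); first by rewrite mulf_neq0.
exists h; apply: (@mm_inj A n).
rewrite !rmorphM mm_mconst -eg0 -eh eq tofracM mconstM.
ring.
Qed.
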